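(* Let $p$ be a prime and $G$ a totally disconnected locally compact group. The following are equivalent: 1. $G$ is locally elliptic. 2. $G$ satisfies Reiter's property for $\varepsilon = 0$. 3. $G$ satisfies Reiter's property for some $\varepsilon \in [0,1]$. 4. $G$ satisfies Reiter's property for $\varepsilon = 1$.
   Context: $C_{00}(G,\mathbb{Q}_p)$ denotes compactly supported continuous functions $G\to\mathbb{Q}_p$, with sup norm $\|\cdot\|_\infty$ (using the $p$-adic norm) and action $(g\cdot f)(x)=f(g^{-1}x)$. For $\varepsilon\in(0,1]$, $G$ satisfies Reiter's property for $\varepsilon$ if for every compact subset $K\subset G$ there exists $f\in C_{00}(G,\mathbb{Q}_p)$ with $\|f\|_\infty=1$ and $\|g\cdot f-f\|_\infty<\varepsilon$ for all $g\in K$; for $\varepsilon=0$ it means that for every compact $K$ there exists such $f$ with $\|f\|_\infty=1$ and $g\cdot f=f$ for all $g\in K$. $G$ is locally elliptic if every finite subset of $G$ is contained in a compact subgroup. *)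

(* Defs.v *)
From HB Require Import structures.
From mathcomp Require Import all_boot all_order all_algebra.
From mathcomp Require Import all_classical all_reals all_analysis Rstruct.
From mathcomp Require Import ring lra.
Set Implicit Arguments. Unset Strict Implicit. Unset Printing Implicit Defensive.
Import Order.TTheory GRing.Theory Num.Theory.
Local Open Scope classical_set_scope.
Local Open Scope ring_scope.

(* An element x of Q_p is represented by the family (r n)_{n : int}   *)
(* where r n is the canonical representative in [0, p^n) of the      *)
(* class x mod p^n Z_p  (Q_p / p^n Z_p = Z[1/p] / p^n Z[1/p]).        *)
(* The base used is maxn p 2, which equals p for every prime p.       *)

Definition pbase (p : nat) : rat := (maxn p 2)%:R.

Definition is_padic (p : nat) (r : int -> rat) : Prop :=
  [/\ forall n : int, 0 <= r n < pbase p ^ n,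
      forall n : int, (r (n + 1) - r n) / pbase p ^ n \is a Num.int
    & exists N : int, forall n : int, n <= N -> r n = 0].

Definition Qp (p : nat) := {r : int -> rat | is_padic p r}.

Lemma pbase_gt0 p : 0 < pbase p.
Proof. by rewrite /pbase ltr0n; apply: leq_trans (leq_maxr p 2). Qed.

Lemma pbase_unit p : pbase p \is a GRing.unit.
Proof. by rewrite unitfE gt_eqF // pbase_gt0. Qed.

Lemma pbaseX_gt0 p (n : int) : 0 < pbase p ^ n.
Proof. by rewrite exprz_gt0 // pbase_gt0. Qed.

Lemma is_padic0 p : is_padic p (fun _ => 0).
Proof.
split=> [n|n|]; first by rewrite lexx pbaseX_gt0.
  by rewrite subrr mul0r rpred0.
by exists 0.
Qed.

Definition qp0 (p : nat) : Qp p := exist _ (fun _ => 0) (is_padic0 p).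

Definition qp_sub_fun p (x y : Qp p) (n : int) : rat :=
  (proj1_sig x n - proj1_sig y n)
  + (if proj1_sig x n < proj1_sig y n then pbase p ^ n else 0).

Lemma is_padic_sub p (x y : Qp p) : is_padic p (qp_sub_fun x y).
Proof.
case: x y => [x [xr xc [Nx xs]]] [y [yr yc [Ny ys]]]; rewrite /qp_sub_fun /=.
split.
- move=> n; have /andP[x0 x1] := xr n; have /andP[y0 y1] := yr n.
  have P0 := pbaseX_gt0 p n.
  case: ltrP => h /=; apply/andP; split; lra.
- move=> n; have P0 := pbaseX_gt0 p n.
  have E : pbase p ^ (n + 1) = pbase p ^ n * pbase p.
    by rewrite exprzDr ?pbase_unit // expr1z.
  have Hx := xc n; have Hy := yc n.
  have Hp : pbase p \is a Num.int by rewrite /pbase rpred_nat.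
  rewrite E.
  case: (x (n + 1) < y (n + 1)); case: (x n < y n).
  + have -> : (x (n + 1) - y (n + 1) + pbase p ^ n * pbase p - (x n - y n + pbase p ^ n)) / pbase p ^ n
       = (x (n + 1) - x n) / pbase p ^ n - (y (n + 1) - y n) / pbase p ^ n + (pbase p - 1).
      by field; exact: lt0r_neq0.
    by rewrite rpredD ?rpredB ?rpred1.
  + have -> : (x (n + 1) - y (n + 1) + pbase p ^ n * pbase p - (x n - y n + 0)) / pbase p ^ n
       = (x (n + 1) - x n) / pbase p ^ n - (y (n + 1) - y n) / pbase p ^ n + pbase p.
      by field; exact: lt0r_neq0.
    by rewrite rpredD ?rpredB.
  + have -> : (x (n + 1) - y (n + 1) + 0 - (x n - y n + pbase p ^ n)) / pbase p ^ n
       = (x (n + 1) - x n) / pbase p ^ n - (y (n + 1) - y n) / pbase p ^ n - 1.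
      by field; exact: lt0r_neq0.
    by rewrite rpredB ?rpredB ?rpred1.
  + have -> : (x (n + 1) - y (n + 1) + 0 - (x n - y n + 0)) / pbase p ^ n
       = (x (n + 1) - x n) / pbase p ^ n - (y (n + 1) - y n) / pbase p ^ n.
      by field; exact: lt0r_neq0.
    by rewrite rpredB.
- exists (Order.min Nx Ny) => n hn.
  rewrite xs ?ys ?ltxx ?subrr ?mul0r ?addr0 //.
    by apply: le_trans hn _; rewrite ge_min lexx orbT.
  by apply: le_trans hn _; rewrite ge_min lexx.
Qed.

Definition qp_sub p (x y : Qp p) : Qp p := exist _ (qp_sub_fun x y) (is_padic_sub x y).

(* The p-adic absolute value |x|_p = p^(-v(x)), where
   v(x) = sup {n | x \in p^n Z_p} = sup {n | r n = 0};  |0|_p = 0. *)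
Definition qp_abs p (x : Qp p) : Rdefinitions.R :=
  inf [set ((maxn p 2)%:R ^ (- n) : Rdefinitions.R) | n in [set n : int | proj1_sig x n = 0]].

Definition is_top_group (G : topologicalType) (mul : G -> G -> G) (inv : G -> G) (one : G) :=
  [/\ forall x y z, mul x (mul y z) = mul (mul x y) z,
      forall x, mul one x = x /\ mul x one = x,
      forall x, mul (inv x) x = one /\ mul x (inv x) = one,
      continuous (fun xy : G * G => mul xy.1 xy.2)
    & continuous inv].

Definition is_tdlc_group (G : topologicalType) (mul : G -> G -> G) (inv : G -> G) (one : G) :=
  [/\ is_top_group mul inv one, hausdorff_space G,
      locally_compact [set: G] & totally_disconnected [set: G]].

Definition is_subgroup (G : Type) (mul : G -> G -> G) (inv : G -> G) (one : G) (H : set G) :=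
  [/\ H one, forall x y, H x -> H y -> H (mul x y) & forall x, H x -> H (inv x)].

Definition locally_elliptic (G : topologicalType) (mul : G -> G -> G) (inv : G -> G) (one : G) :=
  forall F : set G, finite_set F ->
    exists H : set G, [/\ is_subgroup mul inv one H, compact H & F `<=` H].

Definition qp_continuous (G : topologicalType) p (f : G -> Qp p) :=
  forall (x : G) (e : Rdefinitions.R), 0 < e ->
    \forall y \near x, qp_abs (qp_sub (f y) (f x)) < e.

Definition C00 (G : topologicalType) p (f : G -> Qp p) :=
  qp_continuous f /\ compact (closure [set x | f x <> qp0 p]).

Definition supnorm (G : Type) p (f : G -> Qp p) : Rdefinitions.R :=
  sup [set qp_abs (f x) | x in [set: G]].

Definition gact (G : Type) (mul : G -> G -> G) (inv : G -> G) p (g : G) (f : G -> Qp p) :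
  G -> Qp p := fun x => f (mul (inv g) x).

Definition fsub (G : Type) p (f h : G -> Qp p) : G -> Qp p := fun x => qp_sub (f x) (h x).

Definition reiter (G : topologicalType) (mul : G -> G -> G) (inv : G -> G) (p : nat)
    (eps : Rdefinitions.R) :=
  forall K : set G, compact K ->
    exists f : G -> Qp p, [/\ C00 f, supnorm f = 1 &
      forall g, K g -> supnorm (fsub (gact mul inv g f) f) < eps].

Definition reiter0 (G : topologicalType) (mul : G -> G -> G) (inv : G -> G) (p : nat) :=
  forall K : set G, compact K ->
    exists f : G -> Qp p, [/\ C00 f, supnorm f = 1 &
      forall g, K g -> gact mul inv g f = f].

(* Main.v *)
Require Import Defs.
From mathcomp Require Import all_boot all_order all_algebra.
From mathcomp Require Import all_classical all_reals all_analysis Rstruct.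
From mathcomp Require Import ring lra zify.
Import Order.TTheory GRing.Theory Num.Theory.
Local Open Scope classical_set_scope.
Local Open Scope ring_scope.
Set Implicit Arguments. Unset Strict Implicit. Unset Printing Implicit Defensive.


Lemma padic_step p (x : Qp p) (m : int) :
  proj1_sig x (m + 1) = 0 -> proj1_sig x m = 0.
Proof.
case: x => r [hr hc _] /= h.
have := hc m; rewrite h sub0r mulNr rpredN.
have P0 := pbaseX_gt0 p m.
have /andP[r0 r1] := hr m.
set z := r m / pbase p ^ m => zi.
have z0 : 0 <= z by rewrite divr_ge0 // ltW.
have z1 : z < 1 by rewrite ltr_pdivrMr // mul1r.
move: zi; rewrite intrEge0 // => /natrP [n zn].
move: z1; rewrite zn (_ : 1 = 1%:R) // ltr_nat ltnS leqn0 => /eqP n0.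
move: zn; rewrite n0 /z => /eqP; rewrite mulf_eq0 invr_eq0 (gt_eqF P0) orbF.
by move/eqP.
Qed.

Lemma padic_down p (x : Qp p) (k n : int) :
  n <= k -> proj1_sig x k = 0 -> proj1_sig x n = 0.
Proof.
move=> nk; have [d ->] : exists d : nat, k = n + d%:Z.
  by exists `|k - n|%N; rewrite gez0_abs ?subr_ge0 // addrCA subrr addr0.
elim: d => [|d IH]; first by rewrite addr0.
move=> h; apply: IH; apply: padic_step.
by rewrite -addrA (_ : d%:Z + 1 = d.+1%:Z) // -addn1 PoszD.
Qed.

Definition pbR (p : nat) : Rdefinitions.R := (maxn p 2)%:R.

Lemma pbR_ge2 p : 2 <= pbR p.
Proof. by rewrite /pbR ler_nat leq_maxr. Qed.

Lemma pbR_gt0 p : 0 < pbR p.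
Proof. by apply: lt_le_trans (pbR_ge2 p). Qed.

Definition Zset p (x : Qp p) := [set n : int | proj1_sig x n = 0].

Lemma qp_absE p (x : Qp p) :
  qp_abs x = inf [set pbR p ^ (- n) | n in Zset x].
Proof. by []. Qed.

Lemma Zset_ne p (x : Qp p) : Zset x !=set0.
Proof.
case: x => r [h1 h2 [N HN]]; exists N; exact: HN.
Qed.

Lemma qp_abs_lb0 p (x : Qp p) :
  lbound [set pbR p ^ (- n) | n in Zset x] 0.
Proof. move=> y [n hn <-]; by apply/ltW; apply: exprz_gt0; apply: pbR_gt0. Qed.

Lemma qp_abs_ge0 p (x : Qp p) : 0 <= qp_abs x.
Proof.
rewrite qp_absE; apply: lb_le_inf; last exact: qp_abs_lb0.
by have [n hn] := Zset_ne x; exists (pbR p ^ (- n)), n.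
Qed.

Lemma qp_abs_le p (x : Qp p) k : proj1_sig x k = 0 -> qp_abs x <= pbR p ^ (- k).
Proof.
move=> h; rewrite qp_absE.
have := @ge_inf _ [set pbR p ^ (- n) | n in Zset x].
move=> /(_ _ (pbR p ^ (- k))); apply; last by exists k.
by exists 0; exact: qp_abs_lb0.
Qed.

Lemma qp_abs_ge p (x : Qp p) k : proj1_sig x k <> 0 -> pbR p ^ (1 - k) <= qp_abs x.
Proof.
move=> h; rewrite qp_absE; apply: lb_le_inf.
  by have [n hn] := Zset_ne x; exists (pbR p ^ (- n)), n.
move=> y [n hn <-]; apply: ler_weXz2l; first by have := pbR_ge2 p; lra.
have : n < k.
  rewrite ltNge; apply/negP => kn; apply: h; exact: padic_down kn hn.
move=> nk; lia.
Qed.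

Lemma qp_abs_zero p (x : Qp p) : (forall n, proj1_sig x n = 0) -> qp_abs x = 0.
Proof.
move=> h; apply/eqP; rewrite eq_le qp_abs_ge0 andbT.
rewrite leNgt; apply/negP => a0.
set a := qp_abs x in a0.
pose k := (Num.trunc (a^-1)).+1.
have := qp_abs_le (h k%:Z); rewrite -/a.
have hk : a^-1 < k%:R by apply: truncnS_gt.
have : (k < (maxn p 2) ^ k)%N.
  by apply: ltn_expl; apply: leq_trans (leq_maxr p 2).
rewrite -(ltr_nat Rdefinitions.R) natrX -/(pbR p) => hp.
have H1 : a^-1 < pbR p ^+ k by apply: lt_trans hp.
have P0 : 0 < pbR p ^+ k by apply: exprn_gt0; apply: pbR_gt0.
rewrite -exprz_inv => H2.
have H3 : a <= (pbR p ^+ k)^-1 by move: H2; rewrite -exprVn.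
have E1 : a^-1 * a = 1 by rewrite mulVf // gt_eqF.
have E2 : (pbR p ^+ k)^-1 * pbR p ^+ k = 1 by rewrite mulVf // gt_eqF.
move: H1 H3 E1 E2 P0 a0.
set b := a^-1; set P := pbR p ^+ k; set c := P^-1.
move=> H1 H3 E1 E2 P0 a0.
have h1 : a * P <= c * P by rewrite ler_pM2r.
have h2 : a * b < a * P by rewrite ltr_pM2l.
rewrite E2 in h1; rewrite mulrC E1 in h2.
by move: (lt_le_trans h2 h1); rewrite ltxx.
Qed.

Definition qp1_fun (n : int) : rat := if 0 < n then 1 else 0.

Lemma is_padic1 p : is_padic p qp1_fun.
Proof.
have pb2 : 2 <= pbase p by rewrite /pbase ler_nat leq_maxr.
split => [n|n|]; rewrite /qp1_fun.
- case: ifP => n0; last by rewrite lexx pbaseX_gt0.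
  rewrite ler01 /=; apply: lt_le_trans (_ : pbase p ^ 1 <= _).
    by rewrite expr1z; lra.
  by apply: ler_weXz2l; [lra | move: n0; lia].
- case: (ltrgt0P n) => [n0|n0|->].
  + have -> : (0 < n + 1) = true by lia.
    by rewrite subrr mul0r rpred0.
  + have -> : (0 < n + 1) = false by lia.
    by rewrite subrr mul0r rpred0.
  + by rewrite add0r ?ltxx ltr01 ?subr0 expr0z divr1 rpred1.
- by exists 0 => n; rewrite ltNge => ->.
Qed.

Definition qp1 (p : nat) : Qp p := exist _ qp1_fun (is_padic1 p).

Lemma qp1_neq0 p : qp1 p <> qp0 p.
Proof.
move=> /(congr1 (fun x => proj1_sig x 1)) /=; rewrite /qp1_fun ltr01.
by move/eqP; rewrite oner_eq0.
Qed.

Lemma pbR_Vlt1 p : pbR p ^ (-1) < 1.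
Proof.
have := pbR_ge2 p; rewrite -exprz_inv expr1z => h.
by rewrite invf_lt1 //; lra.
Qed.

Lemma qp_abs1 p : qp_abs (qp1 p) = 1.
Proof.
apply/eqP; rewrite eq_le; apply/andP; split.
  by rewrite -(expr0z (pbR p)) -oppr0; apply: qp_abs_le; rewrite /= /qp1_fun ltxx.
rewrite -(expr0z (pbR p)) -(subrr 1); apply: qp_abs_ge.
by rewrite /= /qp1_fun ltr01; apply/eqP; rewrite oner_eq0.
Qed.

Lemma qp_abs0 p : qp_abs (qp0 p) = 0.
Proof. by apply: qp_abs_zero. Qed.

Lemma qp_sub_self p (x : Qp p) n : proj1_sig (qp_sub x x) n = 0.
Proof. by rewrite /= /qp_sub_fun ltxx subrr addr0. Qed.

Lemma qp_abs_sub_self p (x : Qp p) : qp_abs (qp_sub x x) = 0.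
Proof. by apply: qp_abs_zero => n; apply: qp_sub_self. Qed.

Lemma qp_sub_r1 p (a b : Qp p) :
  proj1_sig (qp_sub a b) 1 = 0 -> proj1_sig a 1 = proj1_sig b 1.
Proof.
case: a b => [a [ar ac ae]] [b [br bc be]] /=; rewrite /qp_sub_fun /=.
have /andP[a0 a1] := ar 1; have /andP[b0 b1] := br 1.
case: ifP => h.
  move=> e; exfalso; move: e; set P := pbase p ^ 1 in a1 b1 *; move=> e; lra.
by rewrite addr0 => /eqP; rewrite subr_eq0 => /eqP.
Qed.

Lemma qp_sub_r0 p (a b : Qp p) :
  proj1_sig a 0 = 0 -> proj1_sig b 0 = 0 -> proj1_sig (qp_sub a b) 0 = 0.
Proof. by rewrite /= /qp_sub_fun => -> ->; rewrite ltxx subrr. Qed.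

Lemma abs_lt1 p (y : Qp p) : qp_abs y < 1 -> proj1_sig y 1 = 0.
Proof.
move=> h; apply: contrapT => /qp_abs_ge; rewrite subrr expr0z => h'.
by move: (lt_le_trans h h'); rewrite ltxx.
Qed.

Lemma abs_le1 p (y : Qp p) : qp_abs y <= 1 -> proj1_sig y 0 = 0.
Proof.
move=> h; apply: contrapT => /qp_abs_ge; rewrite subr0 expr1z => h'.
have := pbR_ge2 p; lra.
Qed.

Lemma r0_abs_le1 p (y : Qp p) : proj1_sig y 0 = 0 -> qp_abs y <= 1.
Proof. by move/qp_abs_le; rewrite oppr0 expr0z. Qed.

Lemma r1_abs_le p (y : Qp p) : proj1_sig y 1 = 0 -> qp_abs y <= pbR p ^ (-1).
Proof. by move/qp_abs_le. Qed.


Lemma compact_dir (T : topologicalType) (C : set T) (cC : compact C)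
  (I : Type) (D : set I) (X : I -> set T) :
  (exists i, D i) -> (forall i, D i -> X i `<=` C) ->
  (forall i j, D i -> D j -> exists2 k, D k & X k `<=` X i `&` X j) ->
  (forall i, D i -> X i !=set0) ->
  exists y, C y /\ forall i, D i -> closure (X i) y.
Proof.
move=> [i0 Di0] XC dir ne.
have FF : Filter (filter_from D X).
  by apply: filter_from_filter; [exists i0 | exact: dir].
have PF : ProperFilter (filter_from D X) by apply: filter_from_proper.
have FC : filter_from D X C by exists i0 => //; exact: XC.
have [y [Cy cly]] := cC _ PF FC.
exists y; split => // i Di B By.
by apply: cly => //; exists i.
Qed.

Lemma closure_closed_mem (T : topologicalType) (A : set T) x :
  closed A -> closure A x -> A x.
Proof. by move=> /closure_id {2}->. Qed.

Lemma sepK (T : topologicalType) (hT : hausdorff_space T) (A B : set T) :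
  compact A -> compact B -> A `&` B = set0 ->
  exists U, [/\ open U, A `<=` U & closure U `&` B = set0].
Proof.
move=> cA cB AB0; apply: contrapT => hno.
have ne : forall U, open U /\ A `<=` U -> (B `&` closure U) !=set0.
  move=> U [oU AU]; apply/set0P/negP => /eqP h; apply: hno; exists U; split=> //.
  by rewrite setIC.
have dir : forall U V, open U /\ A `<=` U -> open V /\ A `<=` V ->
    exists2 W, open W /\ A `<=` W & B `&` closure W `<=` (B `&` closure U) `&` (B `&` closure V).
  move=> U V [oU AU] [oV AV]; exists (U `&` V); first by split; [exact: openI | move=> z Az; split; [exact: AU | exact: AV]].
  by move=> z [Bz /closureI [c1 c2]].
have [y [By hy]] := compact_dir cB (ex_intro _ setT (conj openT (@subsetT _ A)))
  (fun U _ => @subIsetl _ B (closure U)) dir ne.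
have cly : forall U, open U -> A `<=` U -> closure U y.
  move=> U oU AU; have := hy U (conj oU AU).
  move=> /closureI [_]; apply: closure_closed_mem; exact: closed_closure.
have ne' : forall W, open W /\ W y -> (A `&` closure W) !=set0.
  move=> W [oW Wy]; apply/set0P/negP => /eqP h.
  have oU : open (~` closure W) by apply: closed_openC; exact: closed_closure.
  have AU : A `<=` ~` closure W.
    by move=> z Az cz; have : (A `&` closure W) z by []; rewrite h.
  have := cly _ oU AU W (open_nbhs_nbhs (conj oW Wy)).
  by move=> [z [ncz Wz]]; apply: ncz; exact: subset_closure.
have dir' : forall U V, open U /\ U y -> open V /\ V y ->
    exists2 W, open W /\ W y & A `&` closure W `<=` (A `&` closure U) `&` (A `&` closure V).
  move=> U V [oU AU] [oV AV]; exists (U `&` V); first by split; [exact: openI | split].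
  by move=> z [Bz /closureI [c1 c2]].
have [z [Az hz]] := compact_dir cA (ex_intro _ setT (conj openT I))
  (fun U _ => @subIsetl _ A (closure U)) dir' ne'.
have clz : forall W, open W -> W y -> closure W z.
  move=> W oW Wy; have := hz W (conj oW Wy).
  move=> /closureI [_]; apply: closure_closed_mem; exact: closed_closure.
have yz : y = z.
  apply: hT => P Q Py Qz; move: Py; rewrite nbhsE => -[W [oW Wy] WP].
  have [t [Wt Qt]] := clz W oW Wy Q Qz.
  by exists t; split => //; apply: WP.
have : (A `&` B) y by split => //; rewrite yz.
by rewrite AB0.
Qed.

Lemma cover_seq (T : topologicalType) (K : set T) (cK : compact K) (O : T -> set T) :
  (forall x, K x -> open (O x) /\ O x x) ->
  exists s : seq T, (forall x, x \in s -> K x) /\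
    K `<=` [set y | exists2 x, x \in s & O x y].
Proof.
move=> hO; apply: contrapT => hno.
pose X (s : seq T) := K `\` [set y | exists2 x, x \in s & O x y].
have ne : forall s, (fun s => forall x, x \in s -> K x) s -> X s !=set0.
  move=> s Ds; apply/set0P/negP => /eqP h; apply: hno; exists s; split => //.
  move=> y Ky; apply: contrapT => ny; have : X s y by [].
  by rewrite h.
have dir : forall s t, (forall x, x \in s -> K x) -> (forall x, x \in t -> K x) ->
   exists2 u, (forall x, x \in u -> K x) & X u `<=` X s `&` X t.
  move=> s t Ds Dt; exists (s ++ t).
    by move=> x; rewrite mem_cat => /orP [/Ds | /Dt].
  move=> y [Ky ny]; split; split => // -[x xs Oxy]; apply: ny; exists x => //;
  by rewrite mem_cat xs ?orbT.
have e0 : exists s : seq T, forall x, x \in s -> K x by exists [::].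
have [y [Ky hy]] := @compact_dir T K cK (seq T) (fun s => forall x, x \in s -> K x) X e0
  (fun s _ => @subDsetl _ K _) dir ne.
have [oy yy] := hO y Ky.
have Dy : forall x, x \in [:: y] -> K x by move=> x; rewrite inE => /eqP ->.
have [z [[Kz nz] Oz]] := hy [:: y] Dy (O y) (open_nbhs_nbhs (conj oy yy)).
by apply: nz; exists y => //; rewrite inE.
Qed.

Definition cfam (T : topologicalType) (C : set T) (x : T) :=
  [set D : set T | [/\ D x, D `<=` C, closed D & closed (C `\` D)]].

Lemma cfamC (T : topologicalType) (C : set T) (x : T) :
  C x -> closed C -> cfam C x C.
Proof.
move=> Cx clC; split => //; rewrite setDv; exact: closed0.
Qed.

Lemma cfamI (T : topologicalType) (C : set T) (x : T) D E :
  cfam C x D -> cfam C x E -> cfam C x (D `&` E).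
Proof.
move=> [Dx DC cD cCD] [Ex EC cE cCE]; split.
- by split.
- by move=> z [/DC].
- exact: closedI.
- by rewrite setDIr; exact: closedU.
Qed.

Lemma cfam_sep (T : topologicalType) (C : set T) (x : T) :
  compact C -> C x -> closed C -> forall W : set T, open W ->
  (forall y, (forall D, cfam C x D -> D y) -> W y) ->
  exists2 D, cfam C x D & D `<=` W.
Proof.
move=> cC Cx clC W oW hQ; apply: contrapT => hno.
pose X D := D `\` W.
have ne : forall D, cfam C x D -> X D !=set0.
  move=> D hD; apply/set0P/negP => /eqP h; apply: hno; exists D => // z Dz.
  by apply: contrapT => nz; have : X D z by []; rewrite h.
have dir : forall D E, cfam C x D -> cfam C x E ->
    exists2 F, cfam C x F & X F `<=` X D `&` X E.
  move=> D E hD hE; exists (D `&` E); first exact: cfamI.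
  by move=> z [[Dz Ez] nW].
have [y [Cy hy]] := @compact_dir T C cC (set T) (cfam C x) X
  (ex_intro _ C (cfamC Cx clC)) (fun D hD z Xz => let: And4 _ DC _ _ := hD in DC z Xz.1)
  dir ne.
have XD : forall D, cfam C x D -> X D y.
  move=> D hD; apply: closure_closed_mem (hy D hD).
  by case: hD => _ _ cD _; apply: closedI => //; exact: open_closedC.
by have [_] := XD _ (cfamC Cx clC); apply; apply: hQ => D /XD [].
Qed.

Lemma cfam_split (T : topologicalType) (hT : hausdorff_space T) (C : set T) (x : T) :
  compact C -> C x -> closed C -> forall A1 A2 : set T,
  closed A1 -> closed A2 -> (forall z, A1 z -> A2 z -> False) ->
  (\bigcap_(D in cfam C x) D) `<=` A1 `|` A2 -> A1 `<=` C -> A2 `<=` C -> A1 x ->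
  forall y, A2 y -> (\bigcap_(D in cfam C x) D) y -> False.
Proof.
move=> cC Cx clC A1 A2 c1 c2 dis QA A1C A2C A1x y A2y Qy.
have cA1 := subclosed_compact c1 cC A1C.
have cA2 := subclosed_compact c2 cC A2C.
have d0 : A1 `&` A2 = set0 by apply/seteqP; split => z // [h1 h2]; exact: dis h1 h2.
have [U [oU A1U clUA2]] := sepK hT cA1 cA2 d0.
have oV : open (~` closure U) by apply: closed_openC; exact: closed_closure.
have oW : open (U `|` ~` closure U) by exact: openU.
have QW : forall z, (forall D, cfam C x D -> D z) -> (U `|` ~` closure U) z.
  move=> z /QA [/A1U|h2]; [by left | right => cz].
  by have : (closure U `&` A2) z by []; rewrite clUA2.
have [D hD DW] := cfam_sep cC Cx clC oW QW.
have [Dx DC cD cCD] := hD.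
have hD' : cfam C x (D `&` closure U).
  split.
  - by split => //; apply: subset_closure; exact: A1U.
  - by move=> z [/DC].
  - by apply: closedI => //; exact: closed_closure.
  - have -> : C `\` (D `&` closure U) = (C `\` D) `|` (D `\` U).
      apply/seteqP; split => z.
        move=> [Cz nDU]; have [Dz|nDz] := pselect (D z); last by left.
        right; split => // Uz; apply: nDU; split => //; exact: subset_closure.
      case=> [[Cz nDz]|[Dz nUz]]; split => //; first by move=> [].
        exact: DC.
      move=> [_ clz]; have := DW z Dz; case => // ncz.
    apply: closedU => //; apply: closedI => //; exact: open_closedC.
have := Qy _ hD' => -[_ cly].
by have : (closure U `&` A2) y by []; rewrite clUA2.
Qed.

Lemma cfam_connected (T : topologicalType) (hT : hausdorff_space T) (C : set T) (x : T) :
  compact C -> C x -> closed C -> connected (\bigcap_(D in cfam C x) D).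
Proof.
move=> cC Cx clC B [b Bb] [Co oCo BE] [Ccl cCcl BE'].
set Q := \bigcap_(D in cfam C x) D in BE BE' *.
have clQ : closed Q by apply: closed_bigI => D [].
have QC : Q `<=` C by move=> z /(_ C (cfamC Cx clC)).
have Qx : Q x by move=> D [].
have clB : closed B by rewrite BE'; exact: closedI.
have clB' : closed (Q `\` B).
  have -> : Q `\` B = Q `&` ~` Co.
    rewrite BE; apply/seteqP; split => z [Qz h]; split => //.
      by move=> Cz; apply: h.
    by move=> [_ Cz]; apply: h.
  by apply: closedI => //; exact: open_closedC.
have BQ : B `<=` Q by rewrite BE => z [].
have split1 : Q `<=` B `|` (Q `\` B).
  by move=> z Qz; have [Bz|nBz] := pselect (B z); [left|right].
have [Bx|nBx] := pselect (B x).
  apply/seteqP; split => // z Qz; apply: contrapT => nBz.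
  apply: (cfam_split hT cC Cx clC clB clB' _ split1 _ _ Bx (y := z)) => //.
  - by move=> w Bw [_].
  - by move=> w /BQ /QC.
  - by move=> w [/QC].
exfalso.
have split2 : Q `<=` (Q `\` B) `|` B.
  by move=> z /split1 [|]; [right|left].
apply: (cfam_split hT cC Cx clC clB' clB _ split2 _ _ _ (y := b)) => //.
- by move=> w [_].
- by move=> w [/QC].
- by move=> w /BQ /QC.
- exact: BQ.
Qed.

Lemma compact_open_nbhd (T : topologicalType) (hT : hausdorff_space T)
  (lc : locally_compact [set: T]) (td : totally_disconnected [set: T]) (x : T) :
  exists V : set T, [/\ open V, compact V & V x].
Proof.
have := lc x I; rewrite withinET => -[C hC [cC clC]].
have Cx : C x by exact: nbhs_singleton.
set Q := \bigcap_(D in cfam C x) D.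
have Qcon := cfam_connected hT cC Cx clC.
have Qx : Q x by move=> D [].
have Q1 : Q `<=` [set x].
  rewrite -(td x I); apply: connected_component_max => //.
have oO : open C° by exact: open_interior.
have QO : forall y, (forall D, cfam C x D -> D y) -> C° y.
  by move=> y /Q1 ->.
have [D [Dx DC cD cCD] DO] := cfam_sep cC Cx clC oO QO.
exists D; split => //.
- have -> : D = C° `&` ~` (C `\` D).
    apply/seteqP; split => z.
      by move=> Dz; split; [exact: DO | move=> []].
    move=> [Oz nz]; apply: contrapT => nDz; apply: nz; split => //.
    exact: interior_subset.
  by apply: openI => //; exact: closed_openC.
- exact: subclosed_compact cD cC DC.
Qed.


Section TG.
Variables (G : topologicalType) (mul : G -> G -> G) (inv : G -> G) (one : G).
Hypothesis hG : is_top_group mul inv one.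

Lemma gA x y z : mul x (mul y z) = mul (mul x y) z.
Proof. by case: hG. Qed.
Lemma g1x x : mul one x = x.
Proof. by case: hG => _ h _ _ _; case: (h x). Qed.
Lemma gx1 x : mul x one = x.
Proof. by case: hG => _ h _ _ _; case: (h x). Qed.
Lemma gVx x : mul (inv x) x = one.
Proof. by case: hG => _ _ h _ _; case: (h x). Qed.
Lemma gxV x : mul x (inv x) = one.
Proof. by case: hG => _ _ h _ _; case: (h x). Qed.
Lemma gK x y : mul (inv x) (mul x y) = y.
Proof. by rewrite gA gVx g1x. Qed.
Lemma gKV x y : mul x (mul (inv x) y) = y.
Proof. by rewrite gA gxV g1x. Qed.
Lemma gKr x y : mul (mul y x) (inv x) = y.
Proof. by rewrite -gA gxV gx1. Qed.
Lemma gKVr x y : mul (mul y (inv x)) x = y.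
Proof. by rewrite -gA gVx gx1. Qed.
Lemma ginv_uniq x y : mul x y = one -> y = inv x.
Proof. by move=> h; rewrite -(gK x y) h gx1. Qed.
Lemma gVK x : inv (inv x) = x.
Proof. by apply/esym/ginv_uniq; rewrite gVx. Qed.
Lemma gVM x y : inv (mul x y) = mul (inv y) (inv x).
Proof. by apply/esym/ginv_uniq; rewrite -gA gKV gxV. Qed.
Lemma gV1 : inv one = one.
Proof. by apply/esym/ginv_uniq; rewrite g1x. Qed.

Lemma cont_mul2 : continuous (fun xy : G * G => mul xy.1 xy.2).
Proof. by case: hG. Qed.
Lemma cont_inv : continuous inv.
Proof. by case: hG. Qed.

Lemma cont_mull a : continuous (mul a).
Proof.
move=> y; apply: (@continuous_comp _ _ _ (fun z => (a, z)) (fun xy => mul xy.1 xy.2)).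
  by apply: cvg_pair; [exact: cvg_cst | exact: cvg_id].
exact: cont_mul2.
Qed.

Lemma cont_mulr a : continuous (fun z => mul z a).
Proof.
move=> y; apply: (@continuous_comp _ _ _ (fun z => (z, a)) (fun xy => mul xy.1 xy.2)).
  by apply: cvg_pair; [exact: cvg_id | exact: cvg_cst].
exact: cont_mul2.
Qed.

Lemma open_transl a (U : set G) : open U -> open [set x | U (mul a x)].
Proof.
move=> oU; apply: (@open_comp _ _ (mul a)) => //.
by move=> x _; exact: cont_mull.
Qed.

Lemma nbhs_transl (H : set G) h : nbhs one H -> nbhs h [set x | H (mul (inv h) x)].
Proof.
move=> Hn; have c := @cont_mull (inv h) h.
by apply: c; rewrite /= gVx.
Qed.

Lemma subgroup_open (H : set G) : is_subgroup mul inv one H -> nbhs one H -> open H.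
Proof.
move=> [H1 HM HV] Hn; rewrite openE => h Hh.
apply: filterS (nbhs_transl h Hn) => x /= hx.
by rewrite -(gKV h x); apply: HM.
Qed.

Lemma subgroup_closed (H : set G) : is_subgroup mul inv one H -> open H -> closed H.
Proof.
move=> [H1 HM HV] oH z clz.
have Hn : nbhs one H by apply: open_nbhs_nbhs.
have [w [Hw /= Hzw]] := clz _ (nbhs_transl z Hn).
have := HM _ _ Hw (HV _ Hzw).
by rewrite gVM gVK gA gxV g1x.
Qed.

Lemma compact_mulr (A : set G) c : compact A -> compact [set mul x c | x in A].
Proof.
move=> cA; apply: continuous_compact => //.
by apply: continuous_subspaceT; exact: cont_mulr.
Qed.

Lemma compact_mulAB (A B : set G) : compact A -> compact B ->
  compact [set mul ab.1 ab.2 | ab in A `*` B].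
Proof.
move=> cA cB; apply: continuous_compact; last exact: compact_setX.
by apply: continuous_subspaceT; exact: cont_mul2.
Qed.


Lemma tube (V : set G) : compact V -> open V ->
  exists2 W, nbhs one W & forall w v, W w -> V v -> V (mul w v).
Proof.
move=> cV oV; have /compact_near_coveringP nc := cV.
have h : forall x, V x -> \forall x' \near x & i \near nbhs one, V (mul i x').
  move=> x Vx.
  have n1 : nbhs (one, x) [set q : G * G | V (mul q.1 q.2)].
    apply: (@cont_mul2 (one, x)); rewrite /= g1x.
    exact: open_nbhs_nbhs.
  case: n1 => -[A1 A2] /= [h1 h2] sub.
  exists (A2, A1) => //= -[a b] [/= ? ?]; exact: (sub (b, a)).
have := nc G (nbhs one) (fun i x' => V (mul i x')) _ h.
move=> W; exists [set i | V `<=` (fun x' => V (mul i x'))].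
  exact: W.
by move=> w v Ww Vv; apply: Ww.
Qed.

Lemma vdantzig (hT : hausdorff_space G) (lc : locally_compact [set: G])
  (td : totally_disconnected [set: G]) :
  exists U, [/\ is_subgroup mul inv one U, open U, compact U & U one].
Proof.
have [V [oV cV V1]] := compact_open_nbhd hT lc td one.
have [W Wn hW] := tube cV oV.
pose N := [set g | (forall v, V v -> V (mul g v)) /\ (forall v, V v -> V (mul (inv g) v))].
have sN : is_subgroup mul inv one N.
  split.
  - by split => v Vv; rewrite ?gV1 g1x.
  - move=> g h [g1 g2] [h1 h2]; split => v Vv.
      by rewrite -gA; apply: g1; apply: h1.
    by rewrite gVM -gA; apply: h2; apply: g2.
  - by move=> g [g1 g2]; split => //; rewrite gVK.
have nN : nbhs one N.
  have Wi : nbhs one [set x | W (inv x)].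
    by apply: (@cont_inv one); rewrite /= gV1.
  apply: filterS (filterI Wn Wi) => g [Wg Wig]; split => v Vv; exact: hW.
have oN := subgroup_open sN nN.
have cN := subgroup_closed sN oN.
exists N; split => //; last by case: sN.
apply: subclosed_compact cN cV _ => g [g1 _].
by rewrite -(gx1 g); apply: g1.
Qed.

Lemma le_csub (hT : hausdorff_space G) (lc : locally_compact [set: G])
  (td : totally_disconnected [set: G]) (le : locally_elliptic mul inv one)
  (K : set G) (cK : compact K) :
  exists A, [/\ is_subgroup mul inv one A, open A, compact A & K `<=` A].
Proof.
have [U [sU oU cU U1]] := vdantzig hT lc td.
have [sU1 sUM sUV] := sU.
have hO : forall x, K x -> open [set y | U (mul (inv x) y)] /\ U (mul (inv x) x).
  by move=> x _; split; [exact: open_transl | rewrite gVx].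
have [s [sK Ks]] := cover_seq cK hO.
pose Fs := s ++ map inv s.
have Fs_inv : forall f, f \in Fs -> inv f \in Fs.
  move=> f; rewrite !mem_cat => /orP [fs | /mapP [g gs ->]].
    by apply/orP; right; apply/mapP; exists f.
  by rewrite gVK gs.
have ht : forall f, exists t : seq G, (forall v, v \in t -> U v) /\
    U `<=` [set y | exists2 v, v \in t & U (mul (inv (mul v f)) (mul y f))].
  move=> f; apply: (@cover_seq G U cU (fun v => [set y | U (mul (inv (mul v f)) (mul y f))])) => v Uv.
  split; last by rewrite /= gVx.
  apply: (@open_comp _ _ (fun y => mul (inv (mul v f)) (mul y f))) => // y _.
  apply: (@continuous_comp _ _ _ (fun y => mul y f) (mul (inv (mul v f)))).
    exact: cont_mulr.
  exact: cont_mull.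
have [t ht'] := choice ht.
pose E := flatten [seq [seq mul v f | v <- t f] | f <- Fs].
have Ep1 : forall f u1 u2, f \in Fs -> U u1 -> U u2 ->
    exists e u, [/\ e \in E, U u & mul (mul u1 f) u2 = mul e u].
  move=> f u1 u2 fF U1' U2'.
  have [_ cov] := ht' f; have [v vt hv] := cov u1 U1'.
  exists (mul v f), (mul (mul (inv (mul v f)) (mul u1 f)) u2); split.
  - by apply/flatten_mapP; exists f => //; apply: map_f.
  - exact: sUM.
  - by rewrite gA gKV.
have Ep2 : forall e, e \in E -> exists v f, [/\ U v, f \in Fs & e = mul v f].
  move=> e /flatten_mapP [f fF /mapP [v vt ->]]; exists v, f; split => //.
  by have [h _] := ht' f; exact: h.
have [L [sL cL EL]] := le [set` E] (finite_seq E).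
pose B := [set b | forall H, is_subgroup mul inv one H -> (forall e, e \in E -> H e) -> H b].
have sB : is_subgroup mul inv one B.
  split.
  - by move=> H [] .
  - by move=> x y Bx By H sH hE; case: (sH) => _ hM _; apply: hM; [apply: Bx | apply: By].
  - by move=> x Bx H sH hE; case: (sH) => _ _ hV; apply: hV; apply: Bx.
have [sB1 sBM sBV] := sB.
have EB : forall e, e \in E -> B e by move=> e ee H _ hE; exact: hE.
have BL : B `<=` L by move=> b Bb; apply: Bb => // e ee; apply: EL.
pose P b := forall u, U u -> exists b' u', [/\ B b', U u' & mul u b = mul b' u'].
pose Cs := [set b | B b /\ P b /\ P (inv b)].
have P1 : P one by move=> u Uu; exists one, u; split => //; rewrite gx1 g1x.
have PM : forall x y, B x -> B y -> P x -> P y -> P (mul x y).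
  move=> x y Bx By Px Py u Uu.
  have [b1 [u1 [Bb1 Uu1 e1]]] := Px u Uu.
  have [b2 [u2 [Bb2 Uu2 e2]]] := Py u1 Uu1.
  exists (mul b1 b2), u2; split => //; first exact: sBM.
  by rewrite gA e1 -gA e2 gA.
have sC : is_subgroup mul inv one Cs.
  split.
  - by split => //; split => //; rewrite gV1.
  - move=> x y [Bx [Px Pxi]] [By [Py Pyi]]; split; first exact: sBM.
    split; first exact: PM.
    by rewrite gVM; apply: PM => //; apply: sBV.
  - by move=> x [Bx [Px Pxi]]; split; [exact: sBV | rewrite gVK].
have EC : forall e, e \in E -> Cs e.
  move=> e ee; split; first exact: EB.
  have [v [f [Uv fF ->]]] := Ep2 e ee.
  split => u Uu.
    have [e' [u' [e'E Uu' h]]] := Ep1 f (mul u v) one fF (sUM _ _ Uu Uv) sU1.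
    exists e', u'; split => //; first exact: EB.
    by rewrite -h gx1 gA.
  have [e' [u' [e'E Uu' h]]] := Ep1 (inv f) u (inv v) (Fs_inv f fF) Uu (sUV _ Uv).
  exists e', u'; split => //; first exact: EB.
  by rewrite -h gVM gA.
have key : forall b, B b -> P b.
  by move=> b Bb; have [_ []] := Bb Cs sC EC.
pose A := [set x | exists b u, [/\ B b, U u & x = mul b u]].
have sA : is_subgroup mul inv one A.
  split.
  - by exists one, one; split => //; rewrite g1x.
  - move=> x y [b1 [u1 [Bb1 Uu1 ->]]] [b2 [u2 [Bb2 Uu2 ->]]].
    have [b' [u' [Bb' Uu' e]]] := key b2 Bb2 u1 Uu1.
    exists (mul b1 b'), (mul u' u2); split; [exact: sBM | exact: sUM |].
    by rewrite -gA (gA u1) e -!gA.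
  - move=> x [b [u [Bb Uu ->]]].
    have [b' [u' [Bb' Uu' e]]] := key (inv b) (sBV _ Bb) (inv u) (sUV _ Uu).
    by exists b', u'; split => //; rewrite gVM.
have UA : U `<=` A by move=> u Uu; exists one, u; split => //; rewrite g1x.
have nA : nbhs one A by apply: filterS UA _; apply: open_nbhs_nbhs.
have oA := subgroup_open sA nA.
have clA := subgroup_closed sA oA.
exists A; split => //.
  apply: subclosed_compact clA (compact_mulAB cL cU) _.
  move=> x [b [u [Bb Uu ->]]]; exists (b, u) => //; split => //; exact: BL.
move=> y /Ks [k ks hk].
have kF : k \in Fs by rewrite mem_cat ks.
have [e [u [ee Uu h]]] := Ep1 k one one kF sU1 sU1.
have Ak : A k by exists e, u; split => //; [exact: EB | rewrite -h g1x gx1].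
have [_ hM _] := sA.
by rewrite -(gKV k y); apply: hM => //; exact: UA.
Qed.

End TG.


Section Main.
Variables (p : nat) (G : topologicalType) (mul : G -> G -> G) (inv : G -> G) (one : G).
Hypothesis hG : is_top_group mul inv one.

Lemma r4_to_1 (hT : hausdorff_space G) : reiter mul inv p 1 -> locally_elliptic mul inv one.
Proof.
move=> R F finF.
have [f [[fc fsupp] fs1 fK]] := R F (finite_compact finF).
set S := [set qp_abs (f x) | x in [set: G]].
have hsup : has_sup S.
  apply: contrapT => /sup_out h; move: fs1; rewrite /supnorm -/S h => /eqP.
  by rewrite eq_sym oner_eq0.
have le1 : forall x, qp_abs (f x) <= 1.
  move=> x; rewrite -fs1; apply: sup_upper_bound => //; by exists x.
have r0 : forall x, proj1_sig (f x) 0 = 0 by move=> x; apply: abs_le1.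
pose phi x := proj1_sig (f x) 1.
have hF : forall g, F g -> forall y, phi (mul (inv g) y) = phi y.
  move=> g Fg y; have := fK g Fg.
  set Sg := [set qp_abs (fsub (gact mul inv g f) f x) | x in [set: G]].
  have ub : ubound Sg 1.
    move=> _ [x _ <-]; apply: r0_abs_le1; rewrite /fsub /gact.
    by apply: qp_sub_r0.
  have hsg : has_sup Sg by split; [exists (qp_abs (fsub (gact mul inv g f) f y)), y | exists 1].
  move=> slt.
  have : qp_abs (fsub (gact mul inv g f) f y) < 1.
    apply: le_lt_trans slt; apply: sup_upper_bound => //; by exists y.
  by move/abs_lt1; rewrite /fsub /gact => /qp_sub_r1.
have [x0 phix0] : exists x0, phi x0 <> 0.
  apply: contrapT => hno.
  have : supnorm f <= pbR p ^ (-1).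
    apply: ge_sup; first by exists (qp_abs (f one)), one.
    move=> _ [x _ <-]; apply: r1_abs_le; apply: contrapT => h; apply: hno; by exists x.
  by rewrite fs1 => h; move: (le_lt_trans h (pbR_Vlt1 p)); rewrite ltxx.
have loc : forall x, \forall y \near x, phi y = phi x.
  move=> x; apply: filterS (fc x 1 ltr01) => y /abs_lt1 /qp_sub_r1.
  by [].
have oS : forall c, open [set y | phi y = c].
  move=> c; rewrite openE => y hy; apply: filterS (loc y) => z hz.
  by rewrite /= hz.
have clS : forall c, closed [set y | phi y = c].
  move=> c; rewrite -openC; rewrite openE => y hy; apply: filterS (loc y) => z hz.
  by rewrite /= hz.
have clS' : closed [set y | phi y <> 0] by exact: open_closedC (oS 0).
have cS' : compact [set y | phi y <> 0].
  apply: subclosed_compact clS' fsupp _ => y hy; apply: subset_closure => hf.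
  by apply: hy; rewrite /phi hf.
pose H := [set h | forall x, phi (mul (inv h) x) = phi x].
have sH : is_subgroup mul inv one H.
  split.
  - by move=> x; rewrite (gV1 hG) (g1x hG).
  - move=> g h Hg Hh x; rewrite (gVM hG) -(gA hG) Hh; exact: Hg.
  - move=> h Hh x; rewrite (gVK hG); have := Hh (mul h x); rewrite (gK hG); by move=> ->.
have clH : closed H.
  have -> : H = \bigcap_(x in [set: G]) [set h | phi (mul (inv h) x) = phi x].
    by apply/seteqP; split => h hh x; [move=> _; apply: hh | apply: hh].
  apply: closed_bigI => x _.
  apply: (@preimage_closed _ _ (fun h => mul (inv h) x) [set y | phi y = phi x]) => //.
  move=> h _; apply: (@continuous_comp _ _ _ inv (fun z => mul z x)).
    exact: (cont_inv hG).
  exact: (cont_mulr hG).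
have HS : H `<=` [set mul y (inv x0) | y in [set y | phi y <> 0]].
  move=> h Hh; exists (mul h x0); last by rewrite (gKr hG).
  by have := Hh (mul h x0); rewrite (gK hG) /= => <-.
exists H; split => //.
  exact: subclosed_compact clH (@compact_mulr _ _ _ _ hG _ (inv x0) cS') HS.
Qed.

Lemma r1_to_2 (hT : hausdorff_space G) (lc : locally_compact [set: G])
  (td : totally_disconnected [set: G]) :
  locally_elliptic mul inv one -> reiter0 mul inv p.
Proof.
move=> le K cK.
have [A [sA oA cA KA]] := le_csub hG hT lc td le cK.
have clA := subgroup_closed hG sA oA.
have [sA1 sAM sAV] := sA.
pose f x := if pselect (A x) then qp1 p else qp0 p.
have fA : forall x, A x -> f x = qp1 p by move=> x Ax; rewrite /f; case: pselect.
have fnA : forall x, ~ A x -> f x = qp0 p by move=> x Ax; rewrite /f; case: pselect.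
have fv : forall x, qp_abs (f x) = 1 \/ qp_abs (f x) = 0.
  move=> x; case: (pselect (A x)) => Ax; by [left; rewrite fA // qp_abs1 | right; rewrite fnA // qp_abs0].
exists f; split.
- split.
  + move=> x e e0.
    have loc : \forall y \near x, f y = f x.
      case: (pselect (A x)) => Ax.
        apply: filterS (open_nbhs_nbhs (conj oA Ax)) => y Ay.
        by rewrite /= (fA y Ay) (fA x Ax).
      have oC : open (~` A) by exact: closed_openC.
      apply: filterS (open_nbhs_nbhs (conj oC Ax)) => y Ay.
      by rewrite /= (fnA y Ay) (fnA x Ax).
    by apply: filterS loc => y ->; rewrite qp_abs_sub_self.
  + have -> : [set x | f x <> qp0 p] = A.
      apply/seteqP; split => x.
        by move=> hx; apply: contrapT => nAx; apply: hx; rewrite /= fnA.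
      by move=> Ax /=; rewrite fA //; exact: qp1_neq0.
    by rewrite -(proj1 (closure_id A) clA).
- rewrite /supnorm; set S := [set qp_abs (f x) | x in [set: G]].
  have ub : ubound S 1.
    by move=> _ [x _ <-]; case: (fv x) => ->; [exact: lexx | exact: ler01].
  have hs : has_sup S by split; [exists (qp_abs (f one)), one | exists 1].
  apply/eqP; rewrite eq_le; apply/andP; split.
    by apply: ge_sup => //; exists (qp_abs (f one)), one.
  have <- : qp_abs (f one) = 1 by rewrite fA // qp_abs1.
  by apply: sup_upper_bound => //; exists one.
- move=> g Kg; apply: funext => x; rewrite /gact.
  have Ag := KA g Kg.
  case: (pselect (A x)) => Ax.
    by rewrite fA ?fA //; apply: sAM => //; exact: sAV.
  rewrite fnA ?fnA // => h; apply: Ax.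
  by rewrite -(gKV hG g x); apply: sAM.
Qed.

Lemma r3_to_4 :
  (reiter0 mul inv p \/ exists eps : Rdefinitions.R, 0 < eps <= 1 /\ reiter mul inv p eps) ->
  reiter mul inv p 1.
Proof.
case=> [R0 | [eps [/andP [e0 e1] Re]]] K cK.
  have [f [Cf fs hinv]] := R0 K cK.
  exists f; split => // g Kg; rewrite hinv //.
  rewrite /supnorm.
  have -> : [set qp_abs (fsub f f x) | x in [set: G]] = [set 0].
    apply/seteqP; split => y.
      by move=> [x _ <-]; rewrite /fsub qp_abs_sub_self.
    by move=> ->; exists one => //; rewrite /fsub qp_abs_sub_self.
  by rewrite sup1 ltr01.
have [f [Cf fs hf]] := Re K cK.
by exists f; split => // g Kg; apply: lt_le_trans (hf g Kg) e1.
Qed.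

End Main.

Theorem theorem4p7 (p : nat) (hp : prime p) (G : topologicalType)
  (mul : G -> G -> G) (inv : G -> G) (one : G)
  (hG : is_tdlc_group mul inv one) :
  [<-> locally_elliptic mul inv one;
       reiter0 mul inv p;
       reiter0 mul inv p \/
         exists eps : Rdefinitions.R, 0 < eps <= 1 /\ reiter mul inv p eps;
       reiter mul inv p 1].
Proof.
case: hG => htg hT lc td.
tfae.
- exact: r1_to_2.
- by left.
- exact: r3_to_4.
- exact: r4_to_1.
Qed.
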